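(* $\mathfrak{ss}_o\leq\max\{\mathfrak b,\mathfrak{ss}_{i,o}\}$ and $\min\{\mathfrak d,\mathfrak{ss}_{i,o}^\perp\}\leq\mathfrak{ss}_o^\perp$.
   Context: Let $\mathfrak S_{cc}$ be the set of all sequences $\mathbf a=\langle a_i:i\in\omega\rangle$ of rational numbers with $a_i\to0$ such that $\sum_i a_i$ is conditionally convergent (converges to a real number, with the positive terms summing to $+\infty$ and the negative terms to $-\infty$). Let $[\omega]^\omega_\omega$ be the set of infinite coinfinite subsets of $\omega$; for such $X$ with increasing enumeration $\langle i_n\rangle$, $\sum_X\mathbf a$ denotes $\sum_n a_{i_n}$. A series diverges if it does not converge to a real number; it diverges by oscillation if its partial sums do not have a unique accumulation point in $\mathbb R\cup\{+\infty,-\infty\}$ (here $\pm\infty$ counts as an accumulation point when the partial sums are unbounded above, resp. below). $\mathfrak{ss}_{i,o}$ (resp. $\mathfrak{ss}_o$) is the least cardinality of $\mathcal X\subseteq[\omega]^\omega_\omega$ such that every $\mathbf a\in\mathfrak S_{cc}$ has some $X\in\mathcal X$ with $\sum_X\mathbf a$ divergent (resp. divergent by oscillation); $\mathfrak{ss}_{i,o}^\perp$ (resp. $\mathfrak{ss}_o^\perp$) is the least cardinality of $\mathcal A\subseteq\mathfrak S_{cc}$ such that no $X\in[\omega]^\omega_\omega$ makes $\sum_X\mathbf a$ divergent (resp. divergent by oscillation) for all $\mathbf a\in\mathcal A$. $\mathfrak b$, $\mathfrak d$ are the bounding and dominating numbers. *)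

(* Defs.v *)
From Stdlib Require Import Reals QArith Qreals.
From Coquelicot Require Import Rbar.
Open Scope R_scope.

Fixpoint psum (u : nat -> R) (n : nat) : R :=
  match n with O => 0 | S k => psum u k + u k end.

Definition series_conv (u : nat -> R) : Prop := exists l : R, Un_cv (psum u) l.

Definition acc_pt (s : nat -> R) (p : Rbar) : Prop :=
  match p with
  | Finite l => forall eps, 0 < eps -> forall N, exists n, (N <= n)%nat /\ Rabs (s n - l) < eps
  | p_infty => forall M, exists n, M < s n
  | m_infty => forall M, exists n, s n < M
  end.

Definition series_div (u : nat -> R) : Prop := ~ series_conv u.

Definition series_osc (u : nat -> R) : Prop := ~ (exists! p : Rbar, acc_pt (psum u) p).

Definition qseq (a : nat -> Q) : nat -> R := fun i => Q2R (a i).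

Definition Scc (a : nat -> Q) : Prop :=
  Un_cv (qseq a) 0 /\ series_conv (qseq a) /\
  (forall M, exists n, M < psum (fun i => Rmax (qseq a i) 0) n) /\
  (forall M, exists n, psum (fun i => Rmin (qseq a i) 0) n < M).

Definition infcoinf (X : nat -> Prop) : Prop :=
  (forall n, exists m, (n <= m)%nat /\ X m) /\ (forall n, exists m, (n <= m)%nat /\ ~ X m).

Definition is_enum (X : nat -> Prop) (e : nat -> nat) : Prop :=
  (forall n, (e n < e (S n))%nat) /\ (forall m, X m <-> exists n, e n = m).

(* sum_X a diverges / diverges by oscillation (X infinite, so its increasing
   enumeration exists and is unique) *)
Definition sub_div (X : nat -> Prop) (a : nat -> Q) : Prop :=
  forall e, is_enum X e -> series_div (fun n => qseq a (e n)).
Definition sub_osc (X : nat -> Prop) (a : nat -> Q) : Prop :=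
  forall e, is_enum X e -> series_osc (fun n => qseq a (e n)).

Definition le_star (f g : nat -> nat) : Prop := exists N, forall n, (N <= n)%nat -> (f n <= g n)%nat.

Definition unbounded_family {I : Type} (B : I -> nat -> nat) : Prop :=
  ~ exists g, forall i, le_star (B i) g.
Definition dominating_family {I : Type} (D : I -> nat -> nat) : Prop :=
  forall f, exists i, le_star f (D i).

(* Main.v *)
Require Import Defs.
From Stdlib Require Import Reals QArith Qreals.
From Coquelicot Require Import Rbar.
From Stdlib Require Import Lia Lra Classical ClassicalEpsilon FunctionalExtensionality PropExtensionality ProofIrrelevance Arith Cantor Bool ZArith.
From mathcomp Require classical_sets boolp.
Open Scope nat_scope.


Lemma ZornP (T : Type) (t0 : T) (R : T -> T -> Prop) :
  (forall t, R t t) -> (forall r s t, R r s -> R s t -> R r t) ->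
  (forall A : T -> Prop, (forall s t, A s -> A t -> R s t \/ R t s) ->
      exists t, forall s, A s -> R s t) ->
  exists t, forall s, R t s -> R s t.
Proof.
intros Hr Ht Hc.
assert (E : forall x y, R x y <-> boolp.asbool (R x y) = true).
{ intros; apply reflect_iff; apply boolp.asboolP. }
destruct (@classical_sets.ZL_preorder T t0 (fun x y => boolp.asbool (R x y))) as [t Ht'].
- intros; apply E; auto.
- intros r s u H1 H2; apply E; apply E in H1; apply E in H2; eauto.
- intros A HA. destruct (Hc A) as [t Hta].
  + intros s u As Au; destruct (HA s u As Au) as [h|h]; [left|right]; apply E; exact h.
  + exists t; intros; apply E; auto.
- exists t; intros s Hs. unfold classical_sets.premaximal in Ht'.
  apply E. apply Ht'. apply E. exact Hs.
Qed.

Definition ext {K V : Type} (p q : (K -> Prop) * (K -> V)) :=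
  (forall x, fst p x -> fst q x) /\ (forall x, fst p x -> snd p x = snd q x).

Lemma zorn_pf (K V : Type) (v0 : V) (P : (K -> Prop) -> (K -> V) -> Prop)
  (D0 : K -> Prop) (f0 : K -> V) (P0 : P D0 f0) :
  (forall A : (K -> Prop) * (K -> V) -> Prop, (exists p, A p) ->
     (forall p q, A p -> A q -> ext p q \/ ext q p) ->
     (forall p, A p -> P (fst p) (snd p)) ->
     forall D f, (forall x, D x <-> exists p, A p /\ fst p x) ->
       (forall p x, A p -> fst p x -> f x = snd p x) -> P D f) ->
  exists D f, P D f /\ forall D' f', P D' f' -> ext (D, f) (D', f') -> forall x, D' x -> D x.
Proof.
intros HU.
pose (T := {p : (K -> Prop) * (K -> V) | P (fst p) (snd p)}).
pose (t0 := exist (fun p => P (fst p) (snd p)) (D0, f0) P0 : T).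
destruct (@ZornP T t0 (fun s t : T => ext (proj1_sig s) (proj1_sig t))) as [t Ht].
- intros [p Hp]; split; auto.
- intros [r Hr] [s Hs] [u Hu] [H1 H2] [H3 H4]; simpl in *; split; intros x Hx.
  + auto.
  + rewrite H2 by auto. apply H4; auto.
- intros A HA.
  destruct (classic (exists s, A s)) as [[s0 As0]|Hne].
  + pose (A' := fun p => exists s : T, A s /\ proj1_sig s = p).
    pose (D := fun x => exists p, A' p /\ fst p x).
    pose (f := fun x => match excluded_middle_informative (exists p, A' p /\ fst p x) with
                        | left h => snd (proj1_sig (constructive_indefinite_description _ h)) x
                        | right _ => v0 end).
    assert (Hf : forall p x, A' p -> fst p x -> f x = snd p x).
    { intros p x Ap Hx. unfold f. destruct excluded_middle_informative as [h|h].
      - destruct constructive_indefinite_description as [q [Aq Hq]]; simpl.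
        destruct Ap as [sp [Asp <-]]. destruct Aq as [sq [Asq <-]].
        destruct (HA sp sq Asp Asq) as [[_ E]|[_ E]].
        + symmetry; apply E; auto.
        + apply E; auto.
      - exfalso; apply h; eauto. }
    assert (PD : P D f).
    { apply (HU A').
      - exists (proj1_sig s0); exists s0; auto.
      - intros p q [sp [Asp <-]] [sq [Asq <-]]. apply HA; auto.
      - intros p [sp [Asp <-]]. exact (proj2_sig sp).
      - intros x; unfold D; tauto.
      - exact Hf. }
    exists (exist (fun p => P (fst p) (snd p)) (D, f) PD).
    intros s As; simpl; split; intros x Hx; simpl.
    * exists (proj1_sig s); split; auto. exists s; auto.
    * symmetry; apply Hf; auto. exists s; auto.
  + exists t0. intros s As; exfalso; eauto.
- exists (fst (proj1_sig t)), (snd (proj1_sig t)); split.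
  + exact (proj2_sig t).
  + intros D' f' PD' Hext x Hx.
    pose (t' := exist (fun p => P (fst p) (snd p)) (D', f') PD' : T).
    destruct (Ht t') as [H1 _].
    * destruct (proj1_sig t) as [d g] eqn:E; simpl in *. exact Hext.
    * apply H1; exact Hx.
Qed.

Definition xm (P : Prop) : {P} + {~P} := excluded_middle_informative P.

Section Hess.
Variable K : Type.
Variable iota : nat -> K.
Hypothesis iota_inj : forall n m, iota n = iota m -> n = m.

Definition good (M : K -> Prop) (g : K -> K * K) :=
  (forall n, M (iota n)) /\
  (forall x, M x -> M (fst (g x)) /\ M (snd (g x))) /\
  (forall y z, M y -> M z -> exists x, M x /\ g x = (y, z)).

Definition inv (x : K) : nat :=
  match xm (exists n, iota n = x) with
  | left h => proj1_sig (constructive_indefinite_description _ h)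
  | right _ => 0 end.

Lemma inv_iota n : inv (iota n) = n.
Proof.
unfold inv; destruct xm as [h|h].
- destruct constructive_indefinite_description as [m Hm]; simpl; auto.
- exfalso; eauto.
Qed.

Definition g0 (x : K) : K * K := let p := of_nat (inv x) in (iota (fst p), iota (snd p)).

Lemma good0 : good (fun x => exists n, iota n = x) g0.
Proof.
split; [|split].
- intros n; eauto.
- intros x _; unfold g0; simpl; split; eauto.
- intros y z [a <-] [b <-]. exists (iota (to_nat (a, b))); split; eauto.
  unfold g0; rewrite inv_iota, cancel_of_to; reflexivity.
Qed.

Lemma good_max : exists M g, good M g /\
   forall M' g', good M' g' -> ext (M, g) (M', g') -> forall x, M' x -> M x.
Proof.
apply (@zorn_pf K (K * K) (iota 0, iota 0) good _ _ good0).
intros A [p0 Ap0] Htot HP D f HD Hf.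
split; [|split].
- intros n; apply HD; exists p0; split; auto. apply (HP p0 Ap0).
- intros x Hx. apply HD in Hx. destruct Hx as [p [Ap Hpx]].
  rewrite (Hf p x Ap Hpx). destruct (HP p Ap) as [_ [H2 _]].
  destruct (H2 x Hpx) as [Ha Hb]; split; apply HD; exists p; auto.
- intros y z Hy Hz. apply HD in Hy; apply HD in Hz.
  destruct Hy as [p [Ap Hpy]]; destruct Hz as [q [Aq Hqz]].
  assert (exists r, A r /\ fst r y /\ fst r z) as [r [Ar [Hry Hrz]]].
  { destruct (Htot p q Ap Aq) as [[E _]|[E _]].
    - exists q; auto.
    - exists p; auto. }
  destruct (HP r Ar) as [_ [_ H3]]. destruct (H3 y z Hry Hrz) as [x [Hx Hgx]].
  exists x; split.
  + apply HD; exists r; auto.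
  + rewrite (Hf r x Ar Hx); auto.
Qed.

Section Max.
Variables (M : K -> Prop) (g : K -> K * K).
Hypothesis Hg : good M g.
Hypothesis Hmax : forall M' g', good M' g' -> ext (M, g) (M', g') -> forall x, M' x -> M x.

Lemma no_inj : ~ exists phi : K -> K, (forall x, M x -> ~ M (phi x)) /\
   (forall x y, M x -> M y -> phi x = phi y -> x = y).
Proof.
intros [phi [Hout Hinj]].
destruct Hg as [G1 [G2 G3]].
pose (tag := fun u => if xm (u = iota 0) then 0 else if xm (u = iota 1) then 1 else 2).
assert (T0 : tag (iota 0) = 0) by (unfold tag; destruct xm; congruence).
assert (T1 : tag (iota 1) = 1).
{ unfold tag; destruct xm as [e|_]; [apply iota_inj in e; discriminate|].
  destruct xm; congruence. }
assert (T2 : tag (iota 2) = 2).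
{ unfold tag; destruct xm as [e|_]; [apply iota_inj in e; discriminate|].
  destruct xm as [e|_]; [apply iota_inj in e; discriminate|]. reflexivity. }
pose (psi := fun y => match xm (exists m, M m /\ phi m = y) with
   | left h => proj1_sig (constructive_indefinite_description _ h)
   | right _ => iota 0 end).
assert (Hpsi : forall m, M m -> psi (phi m) = m).
{ intros m Hm; unfold psi; destruct xm as [h|h].
  - destruct constructive_indefinite_description as [m' [Hm' E]]; simpl.
    apply Hinj; auto.
  - exfalso; eauto. }
pose (h := fun y => let m := psi y in let uv := g m in let pq := g (snd uv) in
   match tag (fst uv) with
   | 0 => (fst pq, phi (snd pq))
   | 1 => (phi (fst pq), snd pq)
   | _ => (phi (fst pq), phi (snd pq)) end).
pose (M' := fun x => M x \/ exists m, M m /\ phi m = x).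
pose (g' := fun x => if xm (M x) then g x else h x).
assert (Hh : forall m y z u, M m -> g m = (u, y) -> g y = z ->
   h (phi m) = match tag u with
   | 0 => (fst z, phi (snd z))
   | 1 => (phi (fst z), snd z)
   | _ => (phi (fst z), phi (snd z)) end).
{ intros m y z u Hm E1 E2. unfold h. rewrite Hpsi by auto. rewrite E1; simpl. rewrite E2. reflexivity. }
assert (Hg'N : forall m, M m -> g' (phi m) = h (phi m)).
{ intros m Hm; unfold g'; destruct xm as [e|_]; [exfalso; exact (Hout m Hm e)|reflexivity]. }
assert (Good' : good M' g').
{ split; [|split].
  - intros n; left; auto.
  - intros x [Hx|[m [Hm <-]]].
    + unfold g'; destruct xm as [_|n]; [|contradiction]. destruct (G2 x Hx); split; left; auto.
    + rewrite Hg'N by auto.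
      destruct (g m) as [u v] eqn:E1. destruct (G2 m Hm) as [Hu Hv]. rewrite E1 in Hu, Hv; simpl in Hu, Hv.
      destruct (g v) as [p q] eqn:E2. destruct (G2 v Hv) as [Hp Hq]. rewrite E2 in Hp, Hq; simpl in Hp, Hq.
      rewrite (Hh m v (p, q) u Hm E1 E2).
      destruct (tag u) as [|[|k]]; simpl; split;
        solve [left; auto | right; eauto].
  - intros y z Hy Hz.
    destruct (classic (M y)) as [My|Ny]; destruct (classic (M z)) as [Mz|Nz].
    + destruct (G3 y z My Mz) as [x [Hx E]]. exists x; split; [left; auto|].
      unfold g'; destruct xm; [auto|contradiction].
    + destruct Hz as [Mz'|[q0 [Hq0 <-]]]; [contradiction|].
      destruct (G3 y q0 My Hq0) as [v [Hv Ev]].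
      destruct (G3 (iota 0) v (G1 0) Hv) as [m [Hm Em]].
      exists (phi m); split; [right; eauto|]. rewrite Hg'N by auto.
      rewrite (Hh m v (y, q0) (iota 0) Hm Em Ev), T0. reflexivity.
    + destruct Hy as [My'|[p0 [Hp0 <-]]]; [contradiction|].
      destruct (G3 p0 z Hp0 Mz) as [v [Hv Ev]].
      destruct (G3 (iota 1) v (G1 1) Hv) as [m [Hm Em]].
      exists (phi m); split; [right; eauto|]. rewrite Hg'N by auto.
      rewrite (Hh m v (p0, z) (iota 1) Hm Em Ev), T1. reflexivity.
    + destruct Hy as [My'|[p0 [Hp0 <-]]]; [contradiction|].
      destruct Hz as [Mz'|[q0 [Hq0 <-]]]; [contradiction|].
      destruct (G3 p0 q0 Hp0 Hq0) as [v [Hv Ev]].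
      destruct (G3 (iota 2) v (G1 2) Hv) as [m [Hm Em]].
      exists (phi m); split; [right; eauto|]. rewrite Hg'N by auto.
      rewrite (Hh m v (p0, q0) (iota 2) Hm Em Ev), T2. reflexivity. }
assert (Hext : ext (M, g) (M', g')).
{ split; simpl; intros x Hx.
  - left; auto.
  - unfold g'; destruct xm; [reflexivity|contradiction]. }
apply (Hout (iota 0) (G1 0)).
apply (Hmax M' g' Good' Hext). right; exists (iota 0); auto.
Qed.

Definition PInj (D : K -> Prop) (phi : K -> K) :=
  (forall x, D x -> M x) /\ (forall x, D x -> ~ M (phi x)) /\
  (forall x y, D x -> D y -> phi x = phi y -> x = y).

Lemma comp_inj : exists psi : K -> K, (forall y, ~ M y -> M (psi y)) /\
   (forall x y, ~ M x -> ~ M y -> psi x = psi y -> x = y).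
Proof.
assert (P0 : PInj (fun _ => False) (fun x => x)) by (repeat split; intros; contradiction).
destruct (@zorn_pf K K (iota 0) PInj _ _ P0) as [D [phi [[HD1 [HD2 HD3]] Hm]]].
{ intros A [p0 Ap0] Htot HP D f HD Hf. split; [|split].
  - intros x Hx; apply HD in Hx; destruct Hx as [p [Ap Hp]]. destruct (HP p Ap) as [H1 _]; auto.
  - intros x Hx; apply HD in Hx; destruct Hx as [p [Ap Hp]]. rewrite (Hf p x Ap Hp).
    destruct (HP p Ap) as [_ [H2 _]]; auto.
  - intros x y Hx Hy E. apply HD in Hx; apply HD in Hy.
    destruct Hx as [p [Ap Hp]]; destruct Hy as [q [Aq Hq]].
    rewrite (Hf p x Ap Hp), (Hf q y Aq Hq) in E.
    destruct (Htot p q Ap Aq) as [[E1 E2]|[E1 E2]].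
    + rewrite (E2 x Hp) in E. destruct (HP q Aq) as [_ [_ H3]]; auto.
    + rewrite (E2 y Hq) in E. destruct (HP p Ap) as [_ [_ H3]]; auto. }
destruct (classic (forall x, M x -> D x)) as [All|NAll].
- exfalso; apply no_inj. exists phi; split.
  + intros x Hx; apply HD2; auto.
  + intros x y Hx Hy; apply HD3; auto.
- destruct (classic (forall y, ~ M y -> exists x, D x /\ phi x = y)) as [Sur|NSur].
  + exists (fun y => match xm (exists x, D x /\ phi x = y) with
       | left h => proj1_sig (constructive_indefinite_description _ h)
       | right _ => iota 0 end).
    split.
    * intros y Hy; destruct xm as [h|h].
      -- destruct constructive_indefinite_description as [x [Hx Ex]]; simpl; auto.
      -- exfalso; apply h; auto.
    * intros x y Hx Hy.
      destruct xm as [h|h]; [|exfalso; apply h; auto].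
      destruct xm as [h'|h']; [|exfalso; apply h'; auto].
      destruct constructive_indefinite_description as [x0 [Hx0 Ex]]; simpl.
      destruct constructive_indefinite_description as [y0 [Hy0 Ey]]; simpl.
      intros <-. congruence.
  + exfalso.
    apply not_all_ex_not in NAll; destruct NAll as [x0 Hx0].
    apply imply_to_and in Hx0; destruct Hx0 as [Mx0 NDx0].
    apply not_all_ex_not in NSur; destruct NSur as [y0 Hy0].
    apply imply_to_and in Hy0; destruct Hy0 as [My0 Ny0].
    pose (D' := fun x => D x \/ x = x0).
    pose (phi' := fun x => if xm (x = x0) then y0 else phi x).
    assert (PInj D' phi').
    { split; [|split].
      - intros x [Hx| ->]; auto.
      - intros x [Hx| ->]; unfold phi'; destruct xm as [e|n]; [subst; contradiction|auto|auto|exfalso; apply n; reflexivity].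
      - intros x y Hx Hy; unfold phi'; destruct (xm (x = x0)) as [ex|nx]; destruct (xm (y = x0)) as [ey|ny].
        + congruence.
        + intros E; destruct Hy as [Hy|Hy]; [|contradiction]. exfalso; apply Ny0; exists y; auto.
        + intros E; destruct Hx as [Hx|Hx]; [|contradiction]. exfalso; apply Ny0; exists x; auto.
        + destruct Hx as [Hx|Hx]; [|contradiction]. destruct Hy as [Hy|Hy]; [|contradiction]. auto. }
    apply NDx0. apply (Hm D' phi' H).
    * split; simpl; intros x Hx; [left; auto|]. unfold phi'; destruct xm; subst; [contradiction|reflexivity].
    * right; reflexivity.
Qed.

End Max.

Theorem hessenberg : exists h : K -> K * K, forall y z, exists x, h x = (y, z).
Proof.
destruct good_max as [M [g [Hg Hmax]]].
destruct (comp_inj M g Hg Hmax) as [psi [Hpsi1 Hpsi2]].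
destruct Hg as [G1 [G2 G3]].
pose (s := fun m => let uv := g m in
   if xm (fst uv = iota 0) then snd uv else
   match xm (exists y, ~ M y /\ psi y = snd uv) with
   | left h => proj1_sig (constructive_indefinite_description _ h)
   | right _ => snd uv end).
assert (Hs : forall x, exists m, M m /\ s m = x).
{ intros x. destruct (classic (M x)) as [Mx|Nx].
  - destruct (G3 (iota 0) x (G1 0) Mx) as [m [Hm E]]. exists m; split; auto.
    unfold s; rewrite E; simpl. destruct xm; [reflexivity|congruence].
  - destruct (G3 (iota 1) (psi x) (G1 1) (Hpsi1 x Nx)) as [m [Hm E]]. exists m; split; auto.
    unfold s; rewrite E; simpl. destruct xm as [e|_]; [apply iota_inj in e; discriminate|].
    destruct xm as [h|h]; [|exfalso; apply h; eauto].
    destruct constructive_indefinite_description as [y [Ny Ey]]; simpl. apply Hpsi2; auto. }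
pose (r := fun x => if xm (M x) then x else iota 0).
exists (fun x => let uv := g (r x) in (s (fst uv), s (snd uv))).
intros y z. destruct (Hs y) as [u [Hu Eu]]. destruct (Hs z) as [v [Hv Ev]].
destruct (G3 u v Hu Hv) as [m [Hm Em]]. exists m. unfold r; destruct xm; [|contradiction].
rewrite Em; simpl; congruence.
Qed.

End Hess.

Open Scope R_scope.


Definition chi (X : nat -> Prop) (x : nat -> R) : nat -> R := fun k => if xm (X k) then x k else 0.
Definition ps (X : nat -> Prop) (x : nat -> R) (r : nat) : R := psum (chi X x) r.
Definition Aabs (x : nat -> R) (r : nat) : R := psum (fun k => Rabs (x k)) r.

Lemma psum_S u n : psum u (S n) = psum u n + u n.
Proof. reflexivity. Qed.

Lemma psum_ext u v n : (forall k, (k < n)%nat -> u k = v k) -> psum u n = psum v n.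
Proof.
induction n; intros H; simpl; auto.
rewrite IHn by (intros; apply H; lia). rewrite H by lia. reflexivity.
Qed.

Lemma psum_plus u v n : psum (fun k => u k + v k) n = psum u n + psum v n.
Proof. induction n; simpl; [lra|rewrite IHn; lra]. Qed.

Lemma psum_scal c u n : psum (fun k => c * u k) n = c * psum u n.
Proof. induction n; simpl; [lra|rewrite IHn; lra]. Qed.

Lemma psum_opp u n : psum (fun k => - u k) n = - psum u n.
Proof. induction n; simpl; [lra|rewrite IHn; lra]. Qed.

Lemma psum_minus u v n : psum (fun k => u k - v k) n = psum u n - psum v n.
Proof. induction n; simpl; [lra|rewrite IHn; lra]. Qed.

Lemma psum_abs_le u n : Rabs (psum u n) <= psum (fun k => Rabs (u k)) n.
Proof.
induction n; simpl. rewrite Rabs_R0; lra.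
eapply Rle_trans; [apply Rabs_triang|lra].
Qed.

Lemma psum_le u v n : (forall k, (k < n)%nat -> u k <= v k) -> psum u n <= psum v n.
Proof.
induction n; intros H; simpl; [lra|].
assert (psum u n <= psum v n) by (apply IHn; intros; apply H; lia).
assert (u n <= v n) by (apply H; lia). lra.
Qed.

Lemma psum_mono u m n : (forall k, 0 <= u k) -> (m <= n)%nat -> psum u m <= psum u n.
Proof.
intros H Hmn; induction Hmn; [lra|simpl; specialize (H m0); lra].
Qed.

Lemma Aabs_mono x m n : (m <= n)%nat -> Aabs x m <= Aabs x n.
Proof. intros; apply psum_mono; auto; intros; apply Rabs_pos. Qed.

Lemma Aabs_pos x n : 0 <= Aabs x n.
Proof. replace 0 with (Aabs x 0) by reflexivity. apply Aabs_mono; lia. Qed.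

Lemma ps_bound X x r : Rabs (ps X x r) <= Aabs x r.
Proof.
unfold ps, Aabs. eapply Rle_trans; [apply psum_abs_le|]. apply psum_le.
intros k _; unfold chi; destruct xm; [lra|rewrite Rabs_R0; apply Rabs_pos].
Qed.

Lemma ps_compl X x r : ps (fun k => ~ X k) x r = psum x r - ps X x r.
Proof.
unfold ps. rewrite <- psum_minus. apply psum_ext; intros k _.
unfold chi; destruct (xm (X k)); destruct (xm (~ X k)); try tauto; lra.
Qed.

Lemma ps_diff_eq X Y x p q : (p <= q)%nat -> (forall k, (p <= k < q)%nat -> (Y k <-> X k)) ->
  ps Y x q - ps Y x p = ps X x q - ps X x p.
Proof.
intros Hpq; induction Hpq; intros H; [lra|].
assert (IH := IHHpq ltac:(intros; apply H; lia)).
unfold ps in *; simpl.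
assert (chi Y x m = chi X x m).
{ unfold chi. specialize (H m ltac:(lia)). destruct (xm (Y m)); destruct (xm (X m)); tauto. }
lra.
Qed.

Lemma ps_diff_eqc X Y x p q : (p <= q)%nat -> (forall k, (p <= k < q)%nat -> (Y k <-> ~ X k)) ->
  ps Y x q - ps Y x p = (psum x q - psum x p) - (ps X x q - ps X x p).
Proof.
intros Hpq H. rewrite (ps_diff_eq (fun k => ~ X k) Y x p q Hpq H).
rewrite !ps_compl. lra.
Qed.

Lemma enum_mono X e : is_enum X e -> forall n m, (n < m)%nat -> (e n < e m)%nat.
Proof.
intros [H1 _] n m Hnm; induction Hnm; [apply H1|]. specialize (H1 m); lia.
Qed.

Lemma enum_ps X e x : is_enum X e -> forall r, exists N,
  (forall n, (n < N)%nat -> (e n < r)%nat) /\ (forall n, (N <= n)%nat -> (r <= e n)%nat) /\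
  ps X x r = psum (fun n => x (e n)) N.
Proof.
intros He r; induction r.
- exists 0%nat; repeat split; intros; lia.
- destruct IHr as [N [H1 [H2 H3]]].
  destruct (classic (X r)) as [Xr|Nr].
  + destruct He as [Hinc Hrange] eqn:HeE. destruct (proj1 (Hrange r) Xr) as [n0 En0].
    assert (n0 = N).
    { destruct (Nat.lt_trichotomy n0 N) as [h|[h|h]]; auto.
      - specialize (H1 n0 h); lia.
      - assert (e N < e n0)%nat by (apply (enum_mono X e He); auto). specialize (H2 N (le_n N)); lia. }
    subst n0. exists (S N); repeat split.
    * intros n Hn. destruct (Nat.eq_dec n N); [subst; lia|]. specialize (H1 n ltac:(lia)); lia.
    * intros n Hn. assert (e N < e n)%nat by (apply (enum_mono X e He); lia). lia.
    * unfold ps in *; simpl. rewrite H3. unfold chi. destruct xm; [|contradiction]. rewrite En0; reflexivity.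
  + exists N; repeat split.
    * intros n Hn; specialize (H1 n Hn); lia.
    * intros n Hn. specialize (H2 n Hn). destruct (Nat.eq_dec (e n) r); [|lia].
      exfalso; apply Nr. destruct He as [_ Hr]. apply Hr. eauto.
    * unfold ps in *; simpl. rewrite H3. unfold chi. destruct xm; [contradiction|lra].
Qed.

Lemma enum_ps_at X e x : is_enum X e -> forall N, ps X x (e N) = psum (fun n => x (e n)) N.
Proof.
intros He N. destruct (enum_ps X e x He (e N)) as [N' [H1 [H2 H3]]].
assert (N' = N).
{ destruct (Nat.lt_trichotomy N' N) as [h|[h|h]]; auto.
  - specialize (H2 N' (le_n _)). assert (e N' < e N)%nat by (apply (enum_mono X e He); auto). lia.
  - specialize (H1 N h); lia. }
subst; auto.
Qed.

Lemma enum_ge X e : is_enum X e -> forall n, (n <= e n)%nat.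
Proof. intros [H _] n; induction n; [lia|specialize (H n); lia]. Qed.

Lemma unb_above_transfer X e x : is_enum X e -> (forall M, exists r, M < ps X x r) ->
  forall M, exists n, M < psum (fun k => x (e k)) n.
Proof.
intros He H M. destruct (H M) as [r Hr]. destruct (enum_ps X e x He r) as [N [_ [_ E]]].
exists N; rewrite <- E; auto.
Qed.

Lemma unb_below_transfer X e x : is_enum X e -> (forall M, exists r, ps X x r < M) ->
  forall M, exists n, psum (fun k => x (e k)) n < M.
Proof.
intros He H M. destruct (H M) as [r Hr]. destruct (enum_ps X e x He r) as [N [_ [_ E]]].
exists N; rewrite <- E; auto.
Qed.

Lemma osc_of_unb s : (forall M, exists n, M < psum s n) -> (forall M, exists n, psum s n < M) ->
  series_osc s.
Proof.
intros Hu Hd [p [Hp Huniq]].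
assert (E1 : p = p_infty) by (apply Huniq; simpl; auto).
assert (E2 : p = m_infty) by (apply Huniq; simpl; auto).
rewrite E1 in E2; discriminate.
Qed.

Lemma conv_transfer X e x l : is_enum X e -> Un_cv (ps X x) l -> series_conv (fun k => x (e k)).
Proof.
intros He H. exists l. intros eps Heps. destruct (H eps Heps) as [N HN].
exists N. intros n Hn. rewrite <- (enum_ps_at X e x He n). apply HN.
pose proof (enum_ge X e He n). lia.
Qed.

Lemma psum_nonneg u n : (forall k, 0 <= u k) -> 0 <= psum u n.
Proof. intros H; induction n; simpl; [lra|specialize (H n); lra]. Qed.

Lemma Rmax0_nonneg x : 0 <= Rmax x 0.
Proof. unfold Rmax; destruct Rle_dec; lra. Qed.

Lemma least_ex (P : nat -> Prop) : (exists n, P n) -> exists n, P n /\ forall m, P m -> (n <= m)%nat.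
Proof.
intros [n Hn]. revert Hn. induction n as [n IH] using (well_founded_induction Wf_nat.lt_wf). intros Hn.
destruct (classic (exists m, (m < n)%nat /\ P m)) as [[m [Hm Pm]]|H].
- exact (IH m Hm Pm).
- exists n; split; auto. intros m Pm. destruct (Compare_dec.le_lt_dec n m); auto. exfalso; eauto.
Qed.

Definition least (P : nat -> Prop) : nat :=
  match xm (exists n, P n) with
  | left h => proj1_sig (constructive_indefinite_description _ (least_ex P h))
  | right _ => 0%nat end.

Lemma least_spec P : (exists n, P n) -> P (least P) /\ forall m, P m -> (least P <= m)%nat.
Proof.
intros h. unfold least. destruct xm as [h'|h']; [|contradiction].
destruct constructive_indefinite_description as [n Hn]; simpl; auto.
Qed.

Fixpoint enm (X : nat -> Prop) (n : nat) : nat :=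
  match n with
  | O => least X
  | S k => least (fun m => X m /\ (enm X k < m)%nat)
  end.

Lemma enum_exists X : (forall n, exists m, (n <= m)%nat /\ X m) -> is_enum X (enm X).
Proof.
intros Hinf.
assert (HS : forall k, (X (enm X (S k)) /\ (enm X k < enm X (S k))%nat) /\
   forall m, X m /\ (enm X k < m)%nat -> (enm X (S k) <= m)%nat).
{ intros k; simpl. apply (least_spec (fun m => X m /\ (enm X k < m)%nat)). destruct (Hinf (S (enm X k))) as [m [Hm Xm]]. exists m; split; [exact Xm|lia]. }
assert (H0 : X (enm X 0) /\ forall m, X m -> (enm X 0 <= m)%nat).
{ simpl; apply (least_spec X). destruct (Hinf 0%nat) as [m [_ Xm]]; eauto. }
assert (HX : forall n, X (enm X n)) by (intros [|n]; [apply H0|apply HS]).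
split.
- intros n; apply HS.
- intros m; split.
  + intros Xm.
    assert (Hmono : forall n, (n <= enm X n)%nat).
    { induction n; [lia|]. destruct (HS n) as [[_ h] _]; lia. }
    assert (forall n, (m <= enm X n)%nat -> exists k, enm X k = m).
    { induction n; intros Hle.
      - exists 0%nat. destruct H0 as [_ h]. specialize (h m Xm). lia.
      - destruct (Compare_dec.le_lt_dec m (enm X n)) as [h|h]; [auto|].
        exists (S n). destruct (HS n) as [_ h2]. specialize (h2 m (conj Xm h)). lia. }
    apply (H m). apply Hmono.
  + intros [n <-]; apply HX.
Qed.

Lemma abel_bound y v M p d : (forall n, Rabs (psum y n) <= M) -> (forall n, v (S n) <= v n) ->
  (forall n, 0 <= v n) ->
  Rabs (psum (fun k => y k * v k) (p + S d) - psum (fun k => y k * v k) p) <= 2 * M * v p.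
Proof.
intros Hy Hv Hv0.
assert (Hmon : forall a b, (a <= b)%nat -> v b <= v a).
{ intros a b Hab; induction Hab; [lra|specialize (Hv m); lra]. }
assert (Inv : forall d, exists E, psum (fun k => y k * v k) (p + S d) - psum (fun k => y k * v k) p
   = (psum y (p + S d) - psum y p) * v (p + d)%nat + E /\ Rabs E <= 2 * M * (v p - v (p + d)%nat)).
{ induction d0.
  - exists 0. rewrite Nat.add_0_r. replace (p + 1)%nat with (S p) by lia. simpl. split; [ring|].
    rewrite Rabs_R0; lra.
  - destruct IHd0 as [E [HE1 HE2]].
    exists (E + (psum y (p + S d0) - psum y p) * (v (p + d0)%nat - v (p + S d0)%nat)).
    replace (p + S (S d0))%nat with (S (p + S d0)) by lia.
    rewrite !psum_S. split.
    + set (a1 := psum (fun k => y k * v k) (p + S d0)) in *.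
      set (a0 := psum (fun k => y k * v k) p) in *.
      replace a1 with ((a1 - a0) + a0) by ring. rewrite HE1. ring.
    + eapply Rle_trans; [apply Rabs_triang|].
      rewrite Rabs_mult.
      assert (Rabs (psum y (p + S d0) - psum y p) <= 2 * M).
      { eapply Rle_trans; [apply Rabs_triang|]. rewrite Rabs_Ropp. pose proof (Hy (p + S d0)%nat). pose proof (Hy p). lra. }
      assert (v (p + S d0)%nat <= v (p + d0)%nat) by (apply Hmon; lia).
      rewrite (Rabs_right (v (p + d0)%nat - v (p + S d0)%nat)) by lra.
      assert (0 <= v (p + d0)%nat - v (p + S d0)%nat) by lra.
      assert (Rabs (psum y (p + S d0) - psum y p) * (v (p + d0)%nat - v (p + S d0)%nat) <=
              2 * M * (v (p + d0)%nat - v (p + S d0)%nat)) by (apply Rmult_le_compat_r; lra).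
      lra. }
destruct (Inv d) as [E [HE1 HE2]]. rewrite HE1.
eapply Rle_trans; [apply Rabs_triang|]. rewrite Rabs_mult.
assert (Rabs (psum y (p + S d) - psum y p) <= 2 * M).
{ eapply Rle_trans; [apply Rabs_triang|]. rewrite Rabs_Ropp. pose proof (Hy (p + S d)%nat). pose proof (Hy p). lra. }
rewrite (Rabs_right (v (p + d)%nat)) by (apply Rle_ge; auto).
assert (Rabs (psum y (p + S d) - psum y p) * v (p + d)%nat <= 2 * M * v (p + d)%nat)
  by (apply Rmult_le_compat_r; auto).
lra.
Qed.

Lemma dirichlet y v M : (forall n, Rabs (psum y n) <= M) -> (forall n, v (S n) <= v n) ->
  (forall n, 0 <= v n) -> Un_cv v 0 -> exists l, Un_cv (psum (fun k => y k * v k)) l.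
Proof.
intros Hy Hv Hv0 Hc.
assert (M0 : 0 <= M) by (specialize (Hy 0%nat); simpl in Hy; rewrite Rabs_R0 in Hy; auto).
assert (Cauchy_crit (psum (fun k => y k * v k))).
{ intros eps Heps.
  destruct (Hc (eps / (2 * M + 1))) as [N HN].
  { apply Rdiv_lt_0_compat; lra. }
  exists N. intros n m Hn Hm. unfold R_dist.
  assert (key : forall a b, (N <= a)%nat -> (a < b)%nat ->
     Rabs (psum (fun k => y k * v k) b - psum (fun k => y k * v k) a) < eps).
  { intros a b Ha Hab. replace b with (a + S (b - a - 1))%nat by lia.
    eapply Rle_lt_trans; [apply abel_bound; eauto|].
    specialize (HN a Ha). unfold R_dist in HN. rewrite Rminus_0_r in HN.
    rewrite Rabs_right in HN by (apply Rle_ge; auto).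
    apply Rmult_lt_compat_l with (r := 2 * M + 1) in HN; [|lra].
    replace ((2 * M + 1) * (eps / (2 * M + 1))) with eps in HN by (field; lra).
    assert (2 * M * v a <= (2 * M + 1) * v a) by (specialize (Hv0 a); nra). lra. }
  destruct (Nat.lt_trichotomy n m) as [h|[h|h]].
  - rewrite <- Rabs_Ropp. replace (- (psum (fun k => y k * v k) n - psum (fun k => y k * v k) m))
     with (psum (fun k => y k * v k) m - psum (fun k => y k * v k) n) by ring. apply key; auto.
  - subst. replace (psum (fun k => y k * v k) m - psum (fun k => y k * v k) m) with 0 by ring.
    rewrite Rabs_R0; auto.
  - apply key; auto. }
destruct (R_complete _ H) as [l Hl]. eauto.
Qed.

Lemma bounded_of_cv s l : Un_cv s l -> exists C, 0 <= C /\ forall n, Rabs (s n) <= C.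
Proof.
intros H. destruct (H 1 Rlt_0_1) as [N HN].
exists (psum (fun k => Rabs (s k)) N + Rabs l + 1). split.
- pose proof (psum_mono (fun k => Rabs (s k)) 0 N (fun k => Rabs_pos _) ltac:(lia)). simpl in H0.
  pose proof (Rabs_pos l). lra.
- intros n. destruct (Compare_dec.le_lt_dec N n) as [h|h].
  + specialize (HN n h). unfold R_dist in HN.
    pose proof (psum_mono (fun k => Rabs (s k)) 0 N (fun k => Rabs_pos _) ltac:(lia)). simpl in H0.
    assert (Rabs (s n) <= Rabs (s n - l) + Rabs l).
    { replace (s n) with ((s n - l) + l) at 1 by ring. apply Rabs_triang. }
    lra.
  + assert (Rabs (s n) <= psum (fun k => Rabs (s k)) N).
    { clear HN. induction N; [lia|]. simpl. destruct (Nat.eq_dec n N).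
      - rewrite e. pose proof (psum_mono (fun k => Rabs (s k)) 0 N (fun k => Rabs_pos _) ltac:(lia)). simpl in H0. lra.
      - pose proof (IHN ltac:(lia)). pose proof (Rabs_pos (s N)). lra. }
    pose proof (Rabs_pos l); lra.
Qed.

Lemma Rmax_mult_pos x w : 0 < w -> Rmax (x * w) 0 = w * Rmax x 0.
Proof.
intros Hw. unfold Rmax. destruct (Rle_dec (x * w) 0); destruct (Rle_dec x 0); try nra.
Qed.

Lemma Rmin_as_max x : Rmin x 0 = - Rmax (- x) 0.
Proof. unfold Rmin, Rmax. destruct (Rle_dec x 0); destruct (Rle_dec (-x) 0); lra. Qed.

Lemma Rabs_as_max x : Rabs x = 2 * Rmax x 0 - x.
Proof. unfold Rmax. destruct (Rle_dec x 0); [rewrite Rabs_left1 by lra|rewrite Rabs_right by lra]; lra. Qed.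

Section Weights.
Variable x : nat -> R.
Variable C : R.
Hypothesis HC : forall n, Rabs (psum x n) <= C.
Definition w (k : nat) : R := / (1 + Aabs x (S k)).

Lemma w_pos k : 0 < w k.
Proof. unfold w. apply Rinv_0_lt_compat. pose proof (Aabs_pos x (S k)); lra. Qed.

Lemma w_le1 k : w k <= 1.
Proof.
unfold w. pose proof (Aabs_pos x (S k)). rewrite <- Rinv_1. apply Rinv_le_contravar; lra.
Qed.

Lemma w_dec k : w (S k) <= w k.
Proof.
unfold w. pose proof (Aabs_pos x (S k)). apply Rinv_le_contravar; [lra|].
pose proof (Aabs_mono x (S k) (S (S k)) ltac:(lia)). lra.
Qed.

Lemma w_ge k N : (S k <= N)%nat -> / (1 + Aabs x N) <= w k.
Proof.
intros h. unfold w. pose proof (Aabs_pos x (S k)). apply Rinv_le_contravar; [lra|].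
pose proof (Aabs_mono x (S k) N h). lra.
Qed.

Hypothesis Hpos : forall M, exists n, M < psum (fun i => Rmax (x i) 0) n.

Lemma Aabs_ge_pos n : psum (fun i => Rmax (x i) 0) n <= Aabs x n.
Proof. apply psum_le. intros k _. unfold Rmax; destruct Rle_dec; [apply Rabs_pos|apply Rle_abs]. Qed.

Lemma w_cv : Un_cv w 0.
Proof.
intros eps Heps. destruct (Hpos (/ eps)) as [N HN].
exists N. intros n Hn. unfold R_dist. rewrite Rminus_0_r. rewrite Rabs_right by (apply Rle_ge, Rlt_le, w_pos).
unfold w. pose proof (Aabs_ge_pos N). pose proof (Aabs_mono x N (S n) ltac:(lia)).
assert (0 < / eps) by (apply Rinv_0_lt_compat; auto).
replace eps with (/ / eps) by (field; lra). apply Rinv_lt_contravar; [|lra].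
pose proof (Aabs_pos x (S n)). nra.
Qed.

Lemma Aabs_eq n : Aabs x n = 2 * psum (fun i => Rmax (x i) 0) n - psum x n.
Proof.
unfold Aabs. rewrite <- psum_scal, <- psum_minus. apply psum_ext. intros k _. apply Rabs_as_max.
Qed.

Lemma chunk N m n : (m <= n)%nat -> (n <= N)%nat ->
  psum (fun i => Rmax (x i * w i) 0) n - psum (fun i => Rmax (x i * w i) 0) m >=
  (psum (fun i => Rmax (x i) 0) n - psum (fun i => Rmax (x i) 0) m) * / (1 + Aabs x N).
Proof.
intros Hmn HnN. induction Hmn.
- lra.
- simpl. pose proof (IHHmn ltac:(lia)).
  rewrite Rmax_mult_pos by apply w_pos.
  pose proof (w_ge m0 N HnN).
  assert (0 <= Rmax (x m0) 0) by (unfold Rmax; destruct Rle_dec; lra).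
  assert (Rmax (x m0) 0 * / (1 + Aabs x N) <= w m0 * Rmax (x m0) 0) by nra.
  lra.
Qed.

Lemma weighted_pos : forall M, exists n, M < psum (fun i => Rmax (x i * w i) 0) n.
Proof.
assert (C0 : 0 <= C) by (specialize (HC 0%nat); simpl in HC; rewrite Rabs_R0 in HC; auto).
assert (Hj : forall j : nat, exists n, INR j / 4 <= psum (fun i => Rmax (x i * w i) 0) n).
{ induction j.
  - exists 0%nat. simpl. lra.
  - destruct IHj as [m Hm].
    set (P := fun n => psum (fun i => Rmax (x i) 0) n).
    destruct (Hpos (2 * P m + 1 + C)) as [n Hn]. fold (P n) in Hn.
    assert (P0 : forall k, 0 <= P k).
    { intros k. unfold P. apply psum_nonneg. intros; apply Rmax0_nonneg. }
    assert (Hmn : (m <= n)%nat).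
    { destruct (Compare_dec.le_lt_dec m n) as [h|h]; auto.
      assert (P n <= P m) by (apply psum_mono; [intros; apply Rmax0_nonneg|lia]).
      pose proof (P0 m). lra. }
    exists n. pose proof (chunk n m n Hmn (le_n n)).
    rewrite Aabs_eq in H. fold (P n) (P m) in H.
    pose proof (HC n) as HCn. pose proof (Rle_abs (psum x n)) as Hab. pose proof (P0 m) as Pm0.
    pose proof (Rle_abs (- psum x n)) as Hab2. rewrite Rabs_Ropp in Hab2.
    assert (pos1 : 0 < 1 + (2 * P n - psum x n)) by lra.
    assert ((P n - P m) * / (1 + (2 * P n - psum x n)) >= / 4).
    { apply Rle_ge. apply (Rmult_le_reg_r (1 + (2 * P n - psum x n))); auto.
      rewrite Rmult_assoc, Rinv_l by lra. rewrite Rmult_1_r. lra. }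
    rewrite S_INR. lra. }
intros M. destruct (INR_unbounded (4 * Rabs M)) as [j Hjj].
destruct (Hj j) as [n Hn]. exists n. pose proof (Rle_abs M). lra.
Qed.

End Weights.

Definition qabs (q : Q) : Q := if Qle_bool 0 q then q else (- q)%Q.

Lemma Q2R_qabs q : Q2R (qabs q) = Rabs (Q2R q).
Proof.
unfold qabs. destruct (Qle_bool 0 q) eqn:E.
- apply Qle_bool_iff in E. apply Qle_Rle in E. unfold Q2R at 1 in E. simpl in E.
  rewrite Rabs_right; auto. unfold Q2R in *; simpl in *. lra.
- assert (~ (0 <= q)%Q) by (intro h; apply Qle_bool_iff in h; congruence).
  assert (q < 0)%Q by (apply Qnot_le_lt; auto).
  apply Qlt_Rlt in H0. rewrite Q2R_opp. rewrite Rabs_left; auto.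
  unfold Q2R in H0 at 2; simpl in H0. lra.
Qed.

Fixpoint qsum (u : nat -> Q) (n : nat) : Q :=
  match n with O => 0%Q | S k => (qsum u k + u k)%Q end.

Lemma Q2R_qsum u n : Q2R (qsum u n) = psum (fun k => Q2R (u k)) n.
Proof.
induction n; simpl.
- unfold Q2R; simpl; lra.
- rewrite Q2R_plus, IHn; reflexivity.
Qed.

Definition wq (a : nat -> Q) (k : nat) : Q := Qinv (1 + qsum (fun j => qabs (a j)) (S k)).
Definition aw (a : nat -> Q) (k : nat) : Q := (a k * wq a k)%Q.

Lemma qseq_aw a k : qseq (aw a) k = qseq a k * w (qseq a) k.
Proof.
unfold qseq, aw, wq, w. rewrite Q2R_mult. f_equal.
assert (E : Q2R (1 + qsum (fun j => qabs (a j)) (S k)) = 1 + Aabs (fun i => Q2R (a i)) (S k)).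
{ rewrite Q2R_plus, Q2R_qsum. unfold Aabs. f_equal.
  - unfold Q2R; simpl; lra.
  - apply psum_ext; intros; apply Q2R_qabs. }
rewrite Q2R_inv.
- rewrite E; reflexivity.
- intro h. apply Qeq_eqR in h. rewrite E in h. unfold Q2R in h at 2. simpl in h.
  pose proof (Aabs_pos (fun i => Q2R (a i)) (S k)). lra.
Qed.

Lemma Scc_bounded a : Scc a -> exists C, 0 <= C /\ forall n, Rabs (psum (qseq a) n) <= C.
Proof. intros [_ [[l Hl] _]]. apply (bounded_of_cv _ l Hl). Qed.

Lemma Aabs_opp x n : Aabs (fun k => - x k) n = Aabs x n.
Proof. unfold Aabs; apply psum_ext; intros; apply Rabs_Ropp. Qed.

Lemma Scc_aw a : Scc a -> Scc (aw a).
Proof.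
intros Hs. pose proof Hs as [H0 [Hc [Hp Hneg]]].
destruct (Scc_bounded a Hs) as [C [C0 HC]].
set (x := qseq a) in *.
assert (Ex : qseq (aw a) = fun k => x k * w x k) by (apply functional_extensionality; intros; apply qseq_aw).
unfold Scc. rewrite Ex.
split; [|split; [|split]].
- intros eps Heps. destruct (H0 eps Heps) as [N HN]. exists N. intros n Hn.
  specialize (HN n Hn). unfold R_dist in *. rewrite Rminus_0_r in *.
  rewrite Rabs_mult. rewrite (Rabs_right (w x n)) by (apply Rle_ge, Rlt_le, w_pos).
  pose proof (w_le1 x n). pose proof (w_pos x n). pose proof (Rabs_pos (x n)). nra.
- destruct (dirichlet x (w x) C HC (w_dec x) (fun k => Rlt_le _ _ (w_pos x k)) (w_cv x Hp)) as [l Hl].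
  exists l; exact Hl.
- apply (weighted_pos x C HC Hp).
- set (y := fun k => - x k).
  assert (HCy : forall n, Rabs (psum y n) <= C) by (intros; unfold y; rewrite psum_opp, Rabs_Ropp; auto).
  assert (Hpy : forall M, exists n, M < psum (fun i => Rmax (y i) 0) n).
  { intros M. destruct (Hneg (- M)) as [n h]. exists n.
    assert (psum (fun i => Rmin (x i) 0) n = - psum (fun i => Rmax (y i) 0) n).
    { rewrite <- psum_opp. apply psum_ext; intros; apply Rmin_as_max. }
    lra. }
  intros M. destruct (weighted_pos y C HCy Hpy (- M)) as [n h]. exists n.
  assert (Ew : forall k, w y k = w x k) by (intros; unfold w, y; rewrite Aabs_opp; reflexivity).
  assert (psum (fun i => Rmin (x i * w x i) 0) n = - psum (fun i => Rmax (y i * w y i) 0) n).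
  { rewrite <- psum_opp. apply psum_ext; intros k _. rewrite Rmin_as_max, Ew. unfold y.
    f_equal. f_equal. ring. }
  lra.
Qed.

Lemma div_aw_unb a X : Scc a -> (forall n, exists m, (n <= m)%nat /\ X m) -> sub_div X (aw a) ->
  (forall M, exists r, M < ps X (qseq a) r) \/ (forall M, exists r, ps X (qseq a) r < M).
Proof.
intros Hs Hinf Hd.
destruct (classic (forall M, exists r, M < ps X (qseq a) r)) as [h1|h1]; [left; auto|].
destruct (classic (forall M, exists r, ps X (qseq a) r < M)) as [h2|h2]; [right; auto|].
exfalso.
apply not_all_ex_not in h1; destruct h1 as [M1 h1].
apply not_all_ex_not in h2; destruct h2 as [M2 h2].
pose proof Hs as [_ [_ [Hp _]]].
set (x := qseq a) in *.
assert (Hb : forall r, Rabs (psum (chi X x) r) <= Rabs M1 + Rabs M2).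
{ intros r. assert (ps X x r <= M1) by (apply Rnot_lt_le; intro; apply h1; eauto).
  assert (M2 <= ps X x r) by (apply Rnot_lt_le; intro; apply h2; eauto).
  unfold ps in *. pose proof (Rle_abs M1) as Q1. pose proof (Rle_abs (-M2)) as Q2. rewrite Rabs_Ropp in Q2.
  pose proof (Rabs_pos M1). pose proof (Rabs_pos M2). apply Rabs_le; split; lra. }
destruct (dirichlet (chi X x) (w x) _ Hb (w_dec x) (fun k => Rlt_le _ _ (w_pos x k)) (w_cv x Hp)) as [l Hl].
apply (Hd (enm X) (enum_exists X Hinf)).
apply (conv_transfer X (enm X) (qseq (aw a)) l (enum_exists X Hinf)).
intros eps Heps. destruct (Hl eps Heps) as [N HN]. exists N. intros n Hn.
replace (ps X (qseq (aw a)) n) with (psum (fun k => chi X x k * w x k) n); auto.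
unfold ps. apply psum_ext. intros k _. unfold chi. rewrite qseq_aw. destruct xm; [reflexivity|ring].
Qed.

Fixpoint maxf (f : nat -> nat) (x : nat) : nat :=
  match x with O => f O | S y => Nat.max (maxf f y) (f (S y)) end.

Lemma maxf_ge f x y : (y <= x)%nat -> (f y <= maxf f x)%nat.
Proof.
induction x; intros h; simpl.
- replace y with 0%nat by lia; lia.
- destruct (Nat.eq_dec y (S x)); [subst; lia|]. specialize (IHx ltac:(lia)); lia.
Qed.

Lemma maxf_mono f x y : (x <= y)%nat -> (maxf f x <= maxf f y)%nat.
Proof. intros h; induction h; simpl; lia. Qed.

Definition Ff (f : nat -> nat) (x : nat) : nat := (maxf f x + x + 1)%nat.

Fixpoint ip (f : nat -> nat) (k : nat) : nat :=
  match k with O => O | S j => Ff f (ip f j) end.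

Fixpoint seg (f : nat -> nat) (n : nat) : nat :=
  match n with
  | O => O
  | S n' => if Nat.leb (ip f (S (seg f n'))) (S n') then S (seg f n') else seg f n'
  end.

Lemma Ff_mono f x y : (x <= y)%nat -> (Ff f x <= Ff f y)%nat.
Proof. intros h; unfold Ff; pose proof (maxf_mono f x y h); lia. Qed.

Lemma ip_lt f k : (ip f k < ip f (S k))%nat.
Proof. simpl; unfold Ff; lia. Qed.

Lemma ip_mono f k m : (k < m)%nat -> (ip f k < ip f m)%nat.
Proof. intros h; induction h; [apply ip_lt|pose proof (ip_lt f m); lia]. Qed.

Lemma ip_ge f k : (k <= ip f k)%nat.
Proof. induction k; [lia|pose proof (ip_lt f k); lia]. Qed.

Lemma seg_spec f n : (ip f (seg f n) <= n < ip f (S (seg f n)))%nat.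
Proof.
induction n.
- simpl; unfold Ff; lia.
- simpl seg. destruct (Nat.leb (Ff f (ip f (seg f n))) (S n)) eqn:E;
  change (Ff f (ip f (seg f n))) with (ip f (S (seg f n))) in *.
  + apply Nat.leb_le in E. pose proof (ip_lt f (S (seg f n))). lia.
  + apply Nat.leb_gt in E. lia.
Qed.

Lemma seg_unique f n m : (ip f m <= n < ip f (S m))%nat -> seg f n = m.
Proof.
intros h. pose proof (seg_spec f n).
destruct (Nat.lt_trichotomy (seg f n) m) as [c|[c|c]]; auto.
- assert (ip f (S (seg f n)) <= ip f m)%nat.
  { destruct (Nat.eq_dec (S (seg f n)) m); [subst; lia|]. pose proof (ip_mono f (S (seg f n)) m ltac:(lia)); lia. }
  lia.
- assert (ip f (S m) <= ip f (seg f n))%nat.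
  { destruct (Nat.eq_dec (S m) (seg f n)); [rewrite e; lia|]. pose proof (ip_mono f (S m) (seg f n) ltac:(lia)); lia. }
  lia.
Qed.

Lemma seg_ge f n N : (ip f N <= n)%nat -> (N <= seg f n)%nat.
Proof.
intros h. pose proof (seg_spec f n). destruct (Compare_dec.le_lt_dec N (seg f n)) as [c|c]; auto.
assert (ip f (S (seg f n)) <= ip f N)%nat.
{ destruct (Nat.eq_dec (S (seg f n)) N); [rewrite e; lia|]. pose proof (ip_mono f (S (seg f n)) N ltac:(lia)); lia. }
lia.
Qed.

Definition Yset (X : nat -> Prop) (f : nat -> nat) (X' : nat -> Prop) (n : nat) : Prop :=
  (X n /\ ~ X' (seg f n)) \/ (~ X n /\ X' (seg f n)).

Definition gp (G : nat -> nat) (n : nat) : nat := maxf G (maxf G n).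
Definition Lset (G f : nat -> nat) (m : nat) : Prop := (G (ip f m) <= ip f (S m))%nat.

Lemma escape_L G f : (forall N, exists n, (N <= n)%nat /\ (gp G n < f n)%nat) ->
  forall N, exists m, (N <= m)%nat /\ Lset G f m.
Proof.
intros He N. destruct (He (ip f N)) as [n [Hn Hfn]].
set (m := seg f n). pose proof (seg_spec f n) as Hs. fold m in Hs.
assert (HmN : (N <= m)%nat) by (apply seg_ge; auto).
assert (H2 : (f n <= ip f (S (S m)))%nat).
{ change (ip f (S (S m))) with (Ff f (ip f (S m))).
  pose proof (Ff_mono f n (ip f (S m)) ltac:(lia)). unfold Ff in *.
  pose proof (maxf_ge f n n (le_n n)). lia. }
destruct (Compare_dec.le_lt_dec (G (ip f m)) (ip f (S m))) as [c|c].
- exists m; split; auto.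
- exists (S m); split; [lia|]. unfold Lset.
  assert (G (ip f m) <= maxf G n)%nat by (apply maxf_ge; lia).
  assert (G (ip f (S m)) <= gp G n)%nat by (unfold gp; apply maxf_ge; lia).
  lia.
Qed.

Section Core.
Variable x : nat -> R.
Variable C : R.
Hypothesis C0 : 0 <= C.
Hypothesis HC : forall n, Rabs (psum x n) <= C.
Variable X : nat -> Prop.
Variable s : R.
Hypothesis Hs : s = 1 \/ s = -1.
Hypothesis HPhi : forall M, exists r, M < s * ps X x r.

Definition Kp (p : nat) : R := Aabs x p + 2 * C + INR p.

Lemma abs_s z : Rabs (s * z) = Rabs z.
Proof. destruct Hs as [-> | ->]; [rewrite Rmult_1_l; auto|replace (-1 * z) with (- z) by ring; apply Rabs_Ropp]. Qed.

Lemma G_ex p : exists q, (p < q)%nat /\ Kp p <= s * (ps X x q - ps X x p).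
Proof.
destruct (HPhi (Aabs x p + Kp p)) as [q Hq]. exists q.
assert (B1 : Rabs (s * ps X x p) <= Aabs x p) by (rewrite abs_s; apply ps_bound).
pose proof (Rle_abs (s * ps X x p)).
assert (Kp p >= 0).
{ unfold Kp. pose proof (Aabs_pos x p). pose proof (pos_INR p). lra. }
split.
- destruct (Compare_dec.le_lt_dec q p) as [c|c]; auto. exfalso.
  assert (Rabs (s * ps X x q) <= Aabs x q) by (rewrite abs_s; apply ps_bound).
  pose proof (Aabs_mono x q p c). pose proof (Rle_abs (s * ps X x q)). lra.
- pose proof (Rle_abs (- (s * ps X x p))). rewrite Rabs_Ropp in H1. lra.
Qed.

Variable G : nat -> nat.
Hypothesis HG : forall p, (p < G p)%nat /\ Kp p <= s * (ps X x (G p) - ps X x p).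
Variable f : nat -> nat.
Variable X' : nat -> Prop.

Lemma claim1 m : Lset G f m -> ~ X' m -> INR (ip f m) <= s * ps (Yset X f X') x (G (ip f m)).
Proof.
intros HL Hn. set (p := ip f m) in *. destruct (HG p) as [Hp HK].
assert (E : ps (Yset X f X') x (G p) - ps (Yset X f X') x p = ps X x (G p) - ps X x p).
{ apply ps_diff_eq; [lia|]. intros k Hk.
  assert (seg f k = m) by (apply seg_unique; unfold Lset in HL; fold p in HL; lia).
  unfold Yset; rewrite H; tauto. }
assert (Rabs (s * ps (Yset X f X') x p) <= Aabs x p) by (rewrite abs_s; apply ps_bound).
pose proof (Rle_abs (- (s * ps (Yset X f X') x p))). rewrite Rabs_Ropp in H0.
unfold Kp in HK.
replace (s * ps (Yset X f X') x (G p)) with (s * ps (Yset X f X') x p + s * (ps X x (G p) - ps X x p)).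
- lra.
- rewrite <- E. ring.
Qed.

Lemma claim2 m : Lset G f m -> X' m -> s * ps (Yset X f X') x (G (ip f m)) <= - INR (ip f m).
Proof.
intros HL Hn. set (p := ip f m) in *. destruct (HG p) as [Hp HK].
assert (E : ps (Yset X f X') x (G p) - ps (Yset X f X') x p =
   (psum x (G p) - psum x p) - (ps X x (G p) - ps X x p)).
{ apply ps_diff_eqc; [lia|]. intros k Hk.
  assert (seg f k = m) by (apply seg_unique; unfold Lset in HL; fold p in HL; lia).
  unfold Yset; rewrite H; tauto. }
assert (Rabs (s * ps (Yset X f X') x p) <= Aabs x p) by (rewrite abs_s; apply ps_bound).
pose proof (Rle_abs (s * ps (Yset X f X') x p)).
assert (Rabs (s * (psum x (G p) - psum x p)) <= 2 * C).
{ rewrite abs_s. eapply Rle_trans; [apply Rabs_triang|]. rewrite Rabs_Ropp.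
  pose proof (HC (G p)). pose proof (HC p). lra. }
pose proof (Rle_abs (s * (psum x (G p) - psum x p))).
unfold Kp in HK.
replace (s * ps (Yset X f X') x (G p)) with
  (s * ps (Yset X f X') x p + s * (psum x (G p) - psum x p) - s * (ps X x (G p) - ps X x p)).
- lra.
- replace (ps (Yset X f X') x (G p)) with (ps (Yset X f X') x p + ((psum x (G p) - psum x p) - (ps X x (G p) - ps X x p))) by (rewrite <- E; ring).
  ring.
Qed.

Lemma core :
  (forall N, exists m, (N <= m)%nat /\ Lset G f m /\ X' m) ->
  (forall N, exists m, (N <= m)%nat /\ Lset G f m /\ ~ X' m) ->
  (forall M, exists r, M < ps (Yset X f X') x r) /\ (forall M, exists r, ps (Yset X f X') x r < M).
Proof.
intros H1 H2.
assert (U : forall M, exists r, M < s * ps (Yset X f X') x r).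
{ intros M. destruct (INR_unbounded M) as [N HN]. destruct (H2 N) as [m [Hm [HL HX]]].
  exists (G (ip f m)). pose proof (claim1 m HL HX).
  pose proof (le_INR _ _ (Nat.le_trans _ _ _ Hm (ip_ge f m))). lra. }
assert (D : forall M, exists r, s * ps (Yset X f X') x r < M).
{ intros M. destruct (INR_unbounded (- M)) as [N HN]. destruct (H1 N) as [m [Hm [HL HX]]].
  exists (G (ip f m)). pose proof (claim2 m HL HX).
  pose proof (le_INR _ _ (Nat.le_trans _ _ _ Hm (ip_ge f m))). lra. }
destruct Hs as [-> | ->].
- split; intros M; [destruct (U M) as [r h]|destruct (D M) as [r h]]; exists r; lra.
- split; intros M; [destruct (D (- M)) as [r h]|destruct (U (- M)) as [r h]]; exists r; lra.
Qed.

End Core.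

Definition zq (k : nat) : Q :=
  if Nat.even k then (1 # Pos.of_succ_nat (Nat.div2 k))%Q else ((-1) # Pos.of_succ_nat (Nat.div2 k))%Q.
Definition zr (k : nat) : R := (if Nat.even k then 1 else -1) * / INR (S (Nat.div2 k)).

Lemma IZR_pos_succ m : IZR (Zpos (Pos.of_succ_nat m)) = INR (S m).
Proof. rewrite Zpos_P_of_succ_nat, INR_IZR_INZ, Nat2Z.inj_succ. reflexivity. Qed.

Lemma qseq_zq k : qseq zq k = zr k.
Proof.
unfold qseq, zq, zr, Q2R. destruct (Nat.even k); simpl Qnum; simpl Qden; rewrite IZR_pos_succ; unfold Rdiv; simpl; ring.
Qed.

Definition hsum (j : nat) : R := psum (fun i => / INR (S i)) j.

Lemma zr_even j : zr (2 * j) = / INR (S j).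
Proof. unfold zr. rewrite Nat.div2_double, Nat.even_mul. simpl. ring. Qed.

Lemma zr_odd j : zr (S (2 * j)) = - / INR (S j).
Proof.
unfold zr. rewrite Nat.div2_succ_double.
replace (Nat.even (S (2 * j))) with false. ring.
rewrite Nat.even_succ, Nat.odd_mul. reflexivity.
Qed.

Lemma inv_pos j : 0 < / INR (S j).
Proof. apply Rinv_0_lt_compat, lt_0_INR; lia. Qed.

Lemma psum_zr j : psum zr (2 * j) = 0 /\ psum zr (S (2 * j)) = / INR (S j).
Proof.
induction j.
- simpl. rewrite zr_even with (j := 0%nat) at 1. simpl. split; [reflexivity|]. lra.
- replace (2 * S j)%nat with (S (S (2 * j))) by lia.
  destruct IHj as [H1 H2]. split.
  + rewrite psum_S, H2, zr_odd. ring.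
  + rewrite psum_S, psum_S, H2, zr_odd. replace (S (S (2 * j))) with (2 * S j)%nat by lia. rewrite zr_even. ring.
Qed.

Lemma psum_zr_pos j : psum (fun i => Rmax (zr i) 0) (2 * j) = hsum j /\
   psum (fun i => Rmin (zr i) 0) (2 * j) = - hsum j.
Proof.
induction j.
- unfold hsum; simpl; split; lra.
- replace (2 * S j)%nat with (S (S (2 * j))) by lia. destruct IHj as [H1 H2].
  rewrite !psum_S, H1, H2, zr_even, zr_odd. unfold hsum; rewrite psum_S. fold (hsum j).
  pose proof (inv_pos j). unfold Rmax, Rmin.
  destruct (Rle_dec (/ INR (S j)) 0); destruct (Rle_dec (- / INR (S j)) 0);
  destruct (Rle_dec 0 0); split; lra.
Qed.

Lemma hsum_double j : hsum j + / 2 <= hsum (2 * S j).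
Proof.
assert (forall d, (d <= S j)%nat -> hsum (S j + d) >= hsum (S j) + INR d * / INR (2 * S j)).
{ induction d; intros h.
  - rewrite Nat.add_0_r. simpl INR. lra.
  - replace (S j + S d)%nat with (S (S j + d)) by lia. unfold hsum; rewrite psum_S. fold (hsum (S j + d)).
    specialize (IHd ltac:(lia)). rewrite (S_INR d).
    assert (/ INR (2 * S j) <= / INR (S (S j + d))).
    { apply Rinv_le_contravar; [apply lt_0_INR; lia|apply le_INR; lia]. }
    rewrite Rmult_plus_distr_r, Rmult_1_l. unfold hsum in *. lra. }
specialize (H (S j) (le_n _)). replace (S j + S j)%nat with (2 * S j)%nat in H by lia.
rewrite mult_INR in H. replace (INR 2) with 2 in H by reflexivity.
replace (INR (S j) * / (2 * INR (S j))) with (/ 2) in H.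
- assert (hsum j <= hsum (S j)) by (unfold hsum; rewrite psum_S; pose proof (inv_pos j); lra). lra.
- field. apply not_0_INR; lia.
Qed.

Lemma hsum_unb : forall M, exists j, M < hsum j.
Proof.
assert (forall n, exists j, INR n / 2 <= hsum j).
{ induction n.
  - exists 0%nat; unfold hsum; simpl; lra.
  - destruct IHn as [j Hj]. exists (2 * S j)%nat. pose proof (hsum_double j). rewrite S_INR. lra. }
intros M. destruct (INR_unbounded (2 * Rabs M)) as [n Hn]. destruct (H n) as [j Hj].
exists j. pose proof (Rle_abs M). lra.
Qed.

Lemma inv_INR_small eps : 0 < eps -> exists N, forall n, (N <= n)%nat -> / INR (S n) < eps.
Proof.
intros He. destruct (INR_unbounded (/ eps)) as [N HN]. exists N. intros n Hn.
assert (INR N <= INR n) by (apply le_INR; auto).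
rewrite S_INR. replace eps with (/ / eps) by (field; lra).
apply Rinv_lt_contravar.
- assert (0 < / eps) by (apply Rinv_0_lt_compat; auto). pose proof (pos_INR n). nra.
- lra.
Qed.

Lemma Scc_zq : Scc zq.
Proof.
assert (E : qseq zq = zr) by (apply functional_extensionality; apply qseq_zq).
unfold Scc; rewrite E. split; [|split; [|split]].
- intros eps Heps. destruct (inv_INR_small eps Heps) as [N HN]. exists (2 * N)%nat. intros n Hn.
  unfold R_dist; rewrite Rminus_0_r. unfold zr.
  rewrite Rabs_mult. replace (Rabs (if Nat.even n then 1 else -1)) with 1
    by (destruct (Nat.even n); [rewrite Rabs_R1; reflexivity|rewrite Rabs_left by lra; ring]).
  rewrite Rmult_1_l, Rabs_right by (apply Rle_ge, Rlt_le, inv_pos). apply HN.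
  pose proof (Nat.div2_odd n). destruct (Nat.odd n); simpl in H; lia.
- exists 0. intros eps Heps. destruct (inv_INR_small eps Heps) as [N HN]. exists (2 * N)%nat. intros n Hn.
  unfold R_dist; rewrite Rminus_0_r.
  pose proof (Nat.div2_odd n). destruct (Nat.odd n) eqn:Eo; simpl in H.
  + replace n with (S (2 * Nat.div2 n)) by lia. rewrite (proj2 (psum_zr _)).
    rewrite Rabs_right by (apply Rle_ge, Rlt_le, inv_pos). apply HN. lia.
  + replace n with (2 * Nat.div2 n)%nat by lia. rewrite (proj1 (psum_zr _)). rewrite Rabs_R0; auto.
- intros M. destruct (hsum_unb M) as [j Hj]. exists (2 * j)%nat. rewrite (proj1 (psum_zr_pos j)); auto.
- intros M. destruct (hsum_unb (- M)) as [j Hj]. exists (2 * j)%nat. rewrite (proj2 (psum_zr_pos j)); lra.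
Qed.

Fixpoint cnt (L : nat -> Prop) (n : nat) : nat :=
  match n with O => O | S m => if xm (L m) then S (cnt L m) else cnt L m end.

Definition spread (L : nat -> Prop) (z : nat -> Q) (n : nat) : Q :=
  if xm (L n) then z (cnt L n) else 0%Q.

Lemma cnt_mono L m n : (m <= n)%nat -> (cnt L m <= cnt L n)%nat.
Proof. intros h; induction h; [lia|simpl; destruct xm; lia]. Qed.

Lemma cnt_unb L : (forall n, exists m, (n <= m)%nat /\ L m) -> forall j, exists N, (j <= cnt L N)%nat.
Proof.
intros HL j; induction j.
- exists 0%nat; lia.
- destruct IHj as [N HN]. destruct (HL N) as [m [Hm Lm]]. exists (S m). simpl. destruct xm; [|contradiction].
  pose proof (cnt_mono L N m Hm). lia.
Qed.

Lemma cnt_hit L : (forall n, exists m, (n <= m)%nat /\ L m) -> forall j, exists n, cnt L n = j.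
Proof.
intros HL j. destruct (cnt_unb L HL j) as [N HN].
assert (forall N, (j <= cnt L N)%nat -> exists n, cnt L n = j).
{ induction N0; intros h.
  - simpl in h. exists 0%nat. simpl; lia.
  - destruct (Nat.eq_dec (cnt L (S N0)) j) as [e|ne]; [eauto|].
    apply IHN0. simpl in *. destruct xm; lia. }
eauto.
Qed.

Lemma psum_spread L z (h : R -> R) : h 0 = 0 -> forall n,
  psum (fun k => h (qseq (spread L z) k)) n = psum (fun j => h (qseq z j)) (cnt L n).
Proof.
intros h0 n; induction n; [reflexivity|].
assert (E : qseq (spread L z) n = if xm (L n) then qseq z (cnt L n) else 0)
  by (unfold qseq, spread; destruct xm; [reflexivity| unfold Q2R; simpl; field]).
rewrite psum_S, IHn, E. simpl cnt. destruct xm.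
- rewrite psum_S; reflexivity.
- rewrite h0; ring.
Qed.

Lemma Scc_spread L z : (forall n, exists m, (n <= m)%nat /\ L m) -> Scc z -> Scc (spread L z).
Proof.
intros HL [H0 [[l Hl] [Hp Hneg]]].
assert (Hev : forall J, exists N, forall n, (N <= n)%nat -> (J <= cnt L n)%nat).
{ intros J. destruct (cnt_unb L HL J) as [N HN]. exists N. intros n Hn. pose proof (cnt_mono L N n Hn). lia. }
split; [|split; [|split]].
- intros eps Heps. destruct (H0 eps Heps) as [J HJ]. destruct (Hev J) as [N HN]. exists N. intros n Hn.
  unfold qseq, spread. destruct xm.
  + apply HJ. auto.
  + unfold R_dist, Q2R; simpl. replace (0 * / 1 - 0) with 0 by field. rewrite Rabs_R0; auto.
- exists l. intros eps Heps. destruct (Hl eps Heps) as [J HJ]. destruct (Hev J) as [N HN]. exists N. intros n Hn.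
  assert (Esp : psum (qseq (spread L z)) n = psum (qseq z) (cnt L n))
    by exact (psum_spread L z (fun t => t) eq_refl n).
  rewrite Esp. apply HJ; auto.
- intros M. destruct (Hp M) as [j Hj]. destruct (cnt_hit L HL j) as [n Hn]. exists n.
  rewrite (psum_spread L z (fun t => Rmax t 0)); [rewrite Hn; auto|].
  unfold Rmax; destruct Rle_dec; lra.
- intros M. destruct (Hneg M) as [j Hj]. destruct (cnt_hit L HL j) as [n Hn']. exists n.
  rewrite (psum_spread L z (fun t => Rmin t 0)); [rewrite Hn'; auto|].
  unfold Rmin; destruct Rle_dec; lra.
Qed.

Lemma psum_evconst u N : (forall k, (N <= k)%nat -> u k = 0) -> forall n, (N <= n)%nat -> psum u n = psum u N.
Proof. intros H n Hn; induction Hn; [reflexivity|simpl; rewrite IHHn, H by lia; ring]. Qed.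

Lemma split_lemma L X' : (forall n, exists m, (n <= m)%nat /\ L m) ->
  (forall n, exists m, (n <= m)%nat /\ X' m) -> sub_div X' (spread L zq) ->
  (forall N, exists m, (N <= m)%nat /\ L m /\ X' m) /\ (forall N, exists m, (N <= m)%nat /\ L m /\ ~ X' m).
Proof.
intros HL HX Hd.
assert (Hs : Scc (spread L zq)) by (apply Scc_spread; auto; apply Scc_zq).
set (b := spread L zq) in *.
assert (Hb0 : forall k, ~ L k -> qseq b k = 0).
{ intros k hk. unfold b, spread, qseq. destruct xm; [contradiction|]. unfold Q2R; simpl; field. }
assert (Conv : forall l, Un_cv (ps X' (qseq b)) l -> False).
{ intros l h. apply (Hd (enm X') (enum_exists X' HX)). apply (conv_transfer X' (enm X') (qseq b) l (enum_exists X' HX) h). }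
split.
- apply NNPP; intro H. apply not_all_ex_not in H. destruct H as [N H].
  apply (Conv (ps X' (qseq b) N)). intros eps Heps. exists N. intros n Hn.
  unfold ps. rewrite (psum_evconst _ N); [unfold R_dist; rewrite Rminus_diag, Rabs_R0; auto| |auto].
  intros k Hk. unfold chi. destruct xm as [x1|x1]; [|reflexivity]. apply Hb0. intro Lk. apply H. eauto.
- apply NNPP; intro H. apply not_all_ex_not in H. destruct H as [N H].
  destruct Hs as [_ [[l Hl] _]].
  apply (Conv (l - ps (fun k => ~ X' k) (qseq b) N)). intros eps Heps.
  destruct (Hl eps Heps) as [N1 HN1]. exists (Nat.max N N1). intros n Hn.
  replace (ps X' (qseq b) n) with (psum (qseq b) n - ps (fun k => ~ X' k) (qseq b) N).
  + unfold R_dist. replace (psum (qseq b) n - ps (fun k => ~ X' k) (qseq b) N - (l - ps (fun k => ~ X' k) (qseq b) N))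
      with (psum (qseq b) n - l) by ring. apply HN1. lia.
  + assert (Ev : ps (fun k => ~ X' k) (qseq b) n = ps (fun k => ~ X' k) (qseq b) N).
    { unfold ps. apply psum_evconst; [|lia].
      intros k Hk. unfold chi. destruct xm as [x1|x1]; [|reflexivity]. apply Hb0. intro Lk. apply H. eauto. }
    rewrite <- Ev, ps_compl. ring.
Qed.

Definition GoodG (a : nat -> Q) (X : nat -> Prop) (t : R * R * (nat -> nat)) : Prop :=
  match t with (C, s, G) =>
  0 <= C /\ (forall n, Rabs (psum (qseq a) n) <= C) /\ (s = 1 \/ s = -1) /\
  (forall M, exists r, M < s * ps X (qseq a) r) /\
  (forall p, (p < G p)%nat /\ Kp (qseq a) C p <= s * (ps X (qseq a) (G p) - ps X (qseq a) p)) end.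

Lemma good_G_ex a X : Scc a -> (forall n, exists m, (n <= m)%nat /\ X m) -> sub_div X (aw a) ->
  exists t, GoodG a X t.
Proof.
intros Hs Hinf Hd. destruct (Scc_bounded a Hs) as [C [C0 HC]].
assert (HP : exists s, (s = 1 \/ s = -1) /\ forall M, exists r, M < s * ps X (qseq a) r).
{ destruct (div_aw_unb a X Hs Hinf Hd) as [h|h].
  - exists 1; split; [auto|]. intros M; destruct (h M) as [r hr]; exists r; lra.
  - exists (-1); split; [auto|]. intros M; destruct (h (- M)) as [r hr]; exists r; lra. }
destruct HP as [s [Hs1 Hs2]].
pose (G := fun p => proj1_sig (constructive_indefinite_description _ (G_ex (qseq a) C C0 X s Hs1 Hs2 p))).
exists (C, s, G). simpl. split; [auto|split; [auto|split; [auto|split; [auto|]]]].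
intros p; unfold G; destruct constructive_indefinite_description as [q [Hq1 Hq2]]; simpl; auto.
Qed.

Lemma ps_bound_fin Z x n : (forall k, (n <= k)%nat -> ~ Z k) -> forall r, Rabs (ps Z x r) <= Aabs x n.
Proof.
intros H r. destruct (Compare_dec.le_lt_dec r n) as [c|c].
- eapply Rle_trans; [apply ps_bound|apply Aabs_mono; auto].
- unfold ps. rewrite (psum_evconst _ n); [apply ps_bound| |lia].
  intros k Hk. unfold chi. destruct xm; [exfalso; eapply H; eauto|reflexivity].
Qed.

Lemma infcoinf_of_unb x C Y : (forall n, Rabs (psum x n) <= C) ->
  (forall M, exists r, M < ps Y x r) -> (forall M, exists r, ps Y x r < M) -> infcoinf Y.
Proof.
intros HC Hu Hd. split.
- apply NNPP; intro h. apply not_all_ex_not in h. destruct h as [n h].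
  assert (forall k, (n <= k)%nat -> ~ Y k) by (intros k hk hy; apply h; eauto).
  destruct (Hu (Aabs x n)) as [r hr]. pose proof (ps_bound_fin Y x n H r).
  pose proof (Rle_abs (ps Y x r)). lra.
- apply NNPP; intro h. apply not_all_ex_not in h. destruct h as [n h].
  assert (forall k, (n <= k)%nat -> ~ ~ Y k) by (intros k hk hy; apply h; eauto).
  destruct (Hu (C + Aabs x n)) as [r hr]. pose proof (ps_bound_fin (fun k => ~ Y k) x n H r).
  rewrite ps_compl in H0. pose proof (HC r).
  pose proof (Rle_abs (psum x r)). pose proof (Rle_abs (- (psum x r - ps Y x r))). rewrite Rabs_Ropp in H3.
  lra.
Qed.

Lemma Y_good a X C s G f X' : GoodG a X (C, s, G) ->
  (forall N, exists n, (N <= n)%nat /\ (gp G n < f n)%nat) ->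
  (forall n, exists m, (n <= m)%nat /\ X' m) ->
  sub_div X' (spread (Lset G f) zq) ->
  infcoinf (Yset X f X') /\ sub_osc (Yset X f X') a.
Proof.
intros [C0 [HC [Hs [HPhi HG]]]] Hesc HX' Hd.
pose proof (escape_L G f Hesc) as HL.
destruct (split_lemma (Lset G f) X' HL HX' Hd) as [S1 S2].
destruct (core (qseq a) C C0 HC X s Hs HPhi G HG f X' S1 S2) as [U D].
split.
- apply (infcoinf_of_unb (qseq a) C); auto.
- intros e He. apply osc_of_unb.
  + apply (unb_above_transfer _ e (qseq a) He U).
  + apply (unb_below_transfer _ e (qseq a) He D).
Qed.

Lemma escapes_of_not_le f g : ~ le_star f g -> forall N, exists n, (N <= n)%nat /\ (g n < f n)%nat.
Proof.
intros H N. apply NNPP; intro h. apply H. exists N. intros n Hn.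
destruct (Compare_dec.le_lt_dec (f n) (g n)) as [c|c]; auto. exfalso; apply h; eauto.
Qed.

Definition evens (n : nat) : Prop := Nat.even n = true.

Lemma evens_ic : infcoinf evens.
Proof.
split; intros n.
- exists (2 * n)%nat; split; [lia|]. unfold evens. rewrite Nat.even_mul; reflexivity.
- exists (S (2 * n)); split; [lia|]. unfold evens. rewrite Nat.even_succ, Nat.odd_mul. simpl. discriminate.
Qed.

Section InjUnb.
Variable IB : Type.
Variable B : IB -> nat -> nat.
Hypothesis HB : unbounded_family B.

Lemma pick_ex (h : nat -> nat) : exists b, ~ le_star (B b) h.
Proof.
apply NNPP; intro H. apply HB. exists h. intros b. apply NNPP; intro h'. apply H; eauto.
Qed.

Definition pick (h : nat -> nat) : IB := proj1_sig (constructive_indefinite_description _ (pick_ex h)).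

Lemma pick_spec h : ~ le_star (B (pick h)) h.
Proof. unfold pick; destruct constructive_indefinite_description; simpl; auto. Qed.

Fixpoint stt (n : nat) : nat -> nat :=
  match n with O => fun _ => O | S m => fun x => (stt m x + B (pick (stt m)) x)%nat end.

Lemma stt_ge k n : (k < n)%nat -> forall x, (B (pick (stt k)) x <= stt n x)%nat.
Proof.
intros h; induction h; intros x; simpl; [lia|]. specialize (IHh x); lia.
Qed.

Lemma inj_unb : exists iota : nat -> IB, forall n m, iota n = iota m -> n = m.
Proof.
exists (fun n => pick (stt n)). intros n m E.
destruct (Nat.lt_trichotomy n m) as [c|[c|c]]; auto; exfalso.
- apply (pick_spec (stt m)). exists 0%nat. intros x _. rewrite <- E. apply stt_ge; auto.
- apply (pick_spec (stt n)). exists 0%nat. intros x _. rewrite E. apply stt_ge; auto.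
Qed.
End InjUnb.

Lemma surj3 (IB IX : Type) (iotaB : nat -> IB) (Hinj : forall n m, iotaB n = iotaB m -> n = m) (x0 : IX) :
  exists phi : (IB + IX)%type -> IX * IB * IX, forall t, exists k, phi k = t.
Proof.
destruct (hessenberg (IB + IX) (fun n => inl (iotaB n))) as [h Hh].
{ intros n m E. injection E. apply Hinj. }
pose (pX := fun k : (IB + IX)%type => match k with inl _ => x0 | inr i => i end).
pose (pB := fun k : (IB + IX)%type => match k with inl b => b | inr _ => iotaB 0%nat end).
exists (fun k => (pX (fst (h k)), pB (fst (h (snd (h k)))), pX (snd (h (snd (h k)))))).
intros [[i b] j]. destruct (Hh (inl b) (inr j)) as [w Hw]. destruct (Hh (inr i) w) as [k Hk].
exists k. rewrite Hk; simpl. rewrite Hw; simpl. reflexivity.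
Qed.

Theorem mainTheorem16 :
  (* ss_o <= max{b, ss_{i,o}} *)
  (forall (IB : Type) (B : IB -> nat -> nat), unbounded_family B ->
   forall (IX : Type) (X : IX -> nat -> Prop),
     (forall i, infcoinf (X i)) ->
     (forall a, Scc a -> exists i, sub_div (X i) a) ->
     exists Y : (IB + IX)%type -> nat -> Prop,
       (forall j, infcoinf (Y j)) /\
       (forall a, Scc a -> exists j, sub_osc (Y j) a)) /\
  (* min{d, ss_{i,o}^perp} <= ss_o^perp *)
  (forall (IA : Type) (A : IA -> nat -> Q),
     (forall i, Scc (A i)) ->
     ~ (exists X, infcoinf X /\ forall i, sub_osc X (A i)) ->
     (exists D : IA -> nat -> nat, dominating_family D) \/
     (exists A' : IA -> nat -> Q, (forall i, Scc (A' i)) /\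
        ~ (exists X, infcoinf X /\ forall i, sub_div X (A' i)))).
Proof.
split.
- intros IB B HB IX X HXic HXdiv.
  destruct (inj_unb IB B HB) as [iotaB HiB].
  destruct (HXdiv zq Scc_zq) as [x0 _].
  destruct (surj3 IB IX iotaB HiB x0) as [phi Hphi].
  pose (Yraw := fun t : IX * IB * IX => match t with (i, b, j) => Yset (X i) (B b) (X j) end).
  exists (fun k => if xm (infcoinf (Yraw (phi k))) then Yraw (phi k) else evens).
  split.
  + intros k. destruct xm; [auto|apply evens_ic].
  + intros a Ha.
    destruct (HXdiv (aw a) (Scc_aw a Ha)) as [i Hi].
    destruct (good_G_ex a (X i) Ha (proj1 (HXic i)) Hi) as [[[C s] G] HG].
    destruct (pick_ex IB B HB (gp G)) as [b Hb].
    pose proof (escapes_of_not_le _ _ Hb) as Hesc.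
    pose proof (escape_L G (B b) Hesc) as HL.
    destruct (HXdiv (spread (Lset G (B b)) zq) (Scc_spread _ _ HL Scc_zq)) as [j Hj].
    destruct (Y_good a (X i) C s G (B b) (X j) HG Hesc (proj1 (HXic j)) Hj) as [Yic Yosc].
    destruct (Hphi (i, b, j)) as [k Hk].
    exists k. rewrite Hk. simpl. destruct xm as [_|n]; [exact Yosc|contradiction].
- intros IA A HA Hno.
  destruct (classic (exists D : IA -> nat -> nat, dominating_family D)) as [hD|hD]; [left; auto|right].
  apply NNPP; intro hA.
  assert (Hall : forall A' : IA -> nat -> Q, (forall i, Scc (A' i)) ->
     exists X, infcoinf X /\ forall i, sub_div X (A' i)).
  { intros A' HA'. apply NNPP; intro h. apply hA. exists A'; auto. }
  destruct (Hall (fun i => aw (A i)) (fun i => Scc_aw (A i) (HA i))) as [X1 [HX1 HX1d]].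
  pose (T := fun i => proj1_sig (constructive_indefinite_description _
       (good_G_ex (A i) X1 (HA i) (proj1 HX1) (HX1d i)))).
  assert (HT : forall i, GoodG (A i) X1 (T i)).
  { intros i. unfold T. destruct constructive_indefinite_description; simpl; auto. }
  pose (Gi := fun i => snd (T i)).
  assert (Hnd : exists f, forall i, ~ le_star f (gp (Gi i))).
  { apply NNPP; intro h. apply hD. exists (fun i => gp (Gi i)). intros f.
    apply NNPP; intro h'. apply h. exists f. intros i hi. apply h'. eauto. }
  destruct Hnd as [f Hf].
  assert (Hesc : forall i N, exists n, (N <= n)%nat /\ (gp (Gi i) n < f n)%nat)
    by (intros i; apply escapes_of_not_le; auto).
  destruct (Hall (fun i => spread (Lset (Gi i) f) zq)
      (fun i => Scc_spread _ _ (escape_L (Gi i) f (Hesc i)) Scc_zq)) as [X2 [HX2 HX2d]].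
  assert (HYi : forall i, infcoinf (Yset X1 f X2) /\ sub_osc (Yset X1 f X2) (A i)).
  { intros i. pose proof (HT i) as HTi. pose proof (Hesc i) as He. pose proof (HX2d i) as Hd.
    unfold Gi in *. revert HTi He Hd. destruct (T i) as [[C s] G]. simpl. intros HTi He Hd.
    apply (Y_good (A i) X1 C s G f X2 HTi He (proj1 HX2) Hd). }
  destruct (classic (exists i : IA, True)) as [[i0 _]|hne].
  + apply Hno. exists (Yset X1 f X2). split; [apply (HYi i0)|]. intros i; apply (HYi i).
  + apply Hno. exists X1. split; auto. intros i; exfalso; apply hne; eauto.
Qed.
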